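(* Suppose (A1)–(A7) hold (see context). Let $\varpi^*=\mathrm{col}(\hat{\boldsymbol{x}}^*,\boldsymbol{z}^*,\boldsymbol{\lambda}^*,\boldsymbol{\mu}^* )\in\mathrm{zer}(\mathcal{A}+\mathcal{B})$ (equivalently $\varpi^*=\mathcal{T}\varpi^*$ with $\mathcal{T}$ as in the context). Then $\hat{\boldsymbol{x}}^*=\mathbf{1}_n\otimes\boldsymbol{x}^*$ for some $\boldsymbol{x}^*\in\mathbb{R}^q$, $\boldsymbol{\mu}^*=\mathbf{1}_m\otimes\mu^*$ for some $\mu^*\in\mathbb{R}^w$, and $$\mathbf{0}_{nq}\in R^T\boldsymbol{F}(\hat{\boldsymbol{x}}^* )+R^TH(R\hat{\boldsymbol{x}}^* )+R^T\boldsymbol{L}\boldsymbol{\lambda}^*+R^T\boldsymbol{\Lambda}^T\boldsymbol{\mu}^*,\quad \mathbf{0}_w\in b-\boldsymbol{A}R\hat{\boldsymbol{x}}^*+N_{\mathbb{R}^w_+}(\mu^* ),\quad \mathbf{0}=\boldsymbol{L}R\hat{\boldsymbol{x}}^*;$$ moreover $(\boldsymbol{x}^*,\boldsymbol{\lambda}^*,\mu^* )$ satisfies $$\mathbf{0}_q\in F(\boldsymbol{x}^* )+H(\boldsymbol{x}^* )+\boldsymbol{L}\boldsymbol{\lambda}^*+\boldsymbol{A}^T\mu^*,\quad \mathbf{0}_w\in b-\boldsymbol{A}\boldsymbol{x}^*+N_{\mathbb{R}^w_+}(\mu^* ),\quad \mathbf{0}_q=\boldsymbol{L}\boldsymbol{x}^*.$$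 Consequently $\boldsymbol{x}^*$ solves $\mathrm{GVI}(\Theta,\mathcal{K})$ and is a v-GNE of the multi-cluster game (both in the full-information and the partial-information formulation).
   Context: Setting. There are $m$ clusters; cluster $j$ has $n_j$ agents; agent $i$ of cluster $j$ chooses $x_i^j\in\mathbb{R}^{q_j}$; $x^j=\mathrm{col}(x_1^j,\dots,x_{n_j}^j)$, $\boldsymbol{x}=\mathrm{col}(x^1,\dots,x^m)\in\mathbb{R}^q$, $q=\sum_jn_jq_j$, $n=\sum_jn_j$; $\boldsymbol{x}^{-j}$ is $\boldsymbol{x}$ without block $x^j$. Agent cost $\theta_i^j=f_i^j(x^j,\boldsymbol{x}^{-j})+h_i^j(x_i^j)$, $f^j=\sum_if_i^j$, $h^j(x^j)=\sum_ih_i^j(x_i^j)$. Coupling: $A^j\in\mathbb{R}^{w\times q_j}$, $b^j\in\mathbb{R}^w$, $b=\sum_jb^j$, $\boldsymbol{A}^j=[A^j,\mathbf{0}_{w\times(n_jq_j-q_j)}]$, $\boldsymbol{A}=[\boldsymbol{A}^1,\dots,\boldsymbol{A}^m]$, $\boldsymbol{\Lambda}=\mathrm{blockdiag}(\boldsymbol{A}^1,\dots,\boldsymbol{A}^m)\in\mathbb{R}^{wm\times q}$, $\boldsymbol{b}=\mathrm{col}(b^1,\dots,b^m)$. Graphs: $\mathcal{G}^j$ undirected weighted graph on cluster $j$ with Laplacian $L^j$; $\mathcal{G}_L$ undirected weighted graph on the leaders (agent 1 of each cluster) with weights $w^{j,l}_{1,1}$ and Laplacian $L^0_m\in\mathbb{R}^{m\times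 m}$. $\boldsymbol{L}^j=L^j\otimes I_{q_j}$, $\boldsymbol{L}=\mathrm{blockdiag}(\boldsymbol{L}^j)\in\mathbb{R}^{q\times q}$, $L=\mathrm{blockdiag}(L^1,\dots,L^m)\in\mathbb{R}^{n\times n}$, $\hat{\boldsymbol{L}}=L\otimes I_q$, $\boldsymbol{L}^0_m=L^0_m\otimes I_w$; $\hat L^0_m\in\mathbb{R}^{n\times n}$ is partitioned into blocks of size $n_j\times n_l$, block $(j,l)$, $j\ne l$, having $(1,1)$ entry $-w^{j,l}_{1,1}$ and zeros elsewhere, block $(j,j)$ having $(1,1)$ entry $\sum_{l\ne j}w^{j,l}_{1,1}$ and zeros elsewhere; $\hat{\boldsymbol{L}}^0_m=\hat L^0_m\otimes I_q$. $s_2$, $s_{\max}$ denote second-smallest and largest eigenvalue. Feasible set $\mathcal{K}=\{\boldsymbol{x}\in\prod\Omega_i^j:\sum_jA^jx_1^j\le b,\ x_i^j=x_l^j\ \forall j,i,l\}$, $\Omega_i^j=\mathrm{dom}\,h_i^j$. $F(\boldsymbol{x})=\mathrm{col}(\nabla_{x^j}f^j(x^j,\boldsymbol{x}^{-j}))_j$, $H(\boldsymbol{x})=\partial h^1(x^1)\times\dots\times\partial h^m(x^m)$, $\Theta=F+H$; $\mathrm{GVI}(\Theta,\mathcal{K})$: find $\boldsymbol{x}^*\in\mathcal{K}$, $g\in\Theta(\boldsymbol{x}^* )$ with $\langle g,\boldsymbol{x}-\boldsymbol{x}^*\rangle\ge0\ \forall\boldsymbol{x}\in\mathcal{K}$;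 a v-GNE is a solution of this GVI. Partial information: agent $(j,i)$ holds an estimate $\hat{\boldsymbol{x}}_i^j\in\mathbb{R}^q$ of the whole profile whose cluster-$j$ block is the true $x^j$; $\hat{\boldsymbol{x}}=\mathrm{col}(\hat{\boldsymbol{x}}_i^j)\in\mathbb{R}^{nq}$ (ordered by $j$ then $i$); $\hat{\boldsymbol{x}}_i^{j,-j}$ is $\hat{\boldsymbol{x}}_i^j$ with the cluster-$j$ block removed; $R_i^j\in\mathbb{R}^{q_j\times q}$ extracts $x_i^j$ from $\hat{\boldsymbol{x}}_i^j$ and $R=\mathrm{blockdiag}(R_i^j)\in\mathbb{R}^{q\times nq}$, so $R\hat{\boldsymbol{x}}=\boldsymbol{x}$. Extended pseudo-gradient $\boldsymbol{F}(\hat{\boldsymbol{x}})=\mathrm{col}\big(\nabla_{x^j}\sum_if_i^j(x^j,\hat{\boldsymbol{x}}_i^{j,-j})\big)_j\in\mathbb{R}^q$. Operators: fix $c>0$ and positive step sizes $\rho_i^j,\tau_i^j,\sigma^j,\nu^j$; $\boldsymbol{\rho}=\mathrm{diag}(\rho_i^jI_q)$, $\boldsymbol{\sigma}=\mathrm{diag}(\sigma^jI_w)$, $\boldsymbol{\tau}=\mathrm{diag}(\tau_i^jI_{q_j})$, $\boldsymbol{\nu}=\mathrm{diag}(\nu^jI_w)$. Variable $\varpi=\mathrm{col}(\hat{\boldsymbol{x}},\boldsymbol{z},\boldsymbol{\lambda},\boldsymbol{\mu})\in\mathbb{R}^{nq}\times\mathbb{R}^{wm}\times\mathbb{R}^q\times\mathbb{R}^{wm}$.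 $\Psi=\mathrm{diag}(\boldsymbol{\rho}^{-1},\boldsymbol{\sigma}^{-1},\boldsymbol{\tau}^{-1},\boldsymbol{\nu}^{-1})$; $\Phi=\begin{bmatrix}0&0&R^T\boldsymbol{L}^T&R^T\boldsymbol{\Lambda}^T\\0&0&0&\boldsymbol{L}^0_m\\-\boldsymbol{L}R&0&0&0\\-\boldsymbol{\Lambda}R&-\boldsymbol{L}^0_m&0&0\end{bmatrix}$; $\mathcal{A}(\varpi)=\mathrm{col}(R^T\boldsymbol{F}(\hat{\boldsymbol{x}})+c(\hat{\boldsymbol{L}}+\hat{\boldsymbol{L}}^0_m)\hat{\boldsymbol{x}},\mathbf{0}_{wm},\mathbf{0}_q,\boldsymbol{b})+\Phi\varpi$; $\mathcal{B}(\varpi)=R^TH(R\hat{\boldsymbol{x}})\times\{\mathbf{0}_{wm}\}\times\{\mathbf{0}_q\}\times N_{\mathbb{R}^{wm}_+}(\boldsymbol{\mu})$, where $R^TH(R\hat{\boldsymbol{x}})=\{R^Tv:v\in H(R\hat{\boldsymbol{x}})\}$. $\mathcal{T}:=\Psi^{-1}\mathcal{A}+(\mathrm{Id}-\Psi^{-1}\mathcal{A})\circ(\mathrm{Id}+\Psi^{-1}\mathcal{B})^{-1}\circ(\mathrm{Id}-\Psi^{-1}\mathcal{A})$. Let $\ell_{\mathcal{A}}=\kappa+c(s_{\max}(L)+s_{\max}(L^0_m))+2s_{\max}(L)+2s_{\max}(L^0_m)+2\max_j\sigma_{\max}(A^j)$. Assumptions: (A1) each $f_i^j(\cdot,\boldsymbol{x}^{-j})$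 convex and $C^1$, each $h_i^j$ lsc convex with $\mathrm{dom}\,h_i^j$ nonempty compact convex; (A2) $\mathcal{K}$ nonempty, Slater's condition holds; (A3) every $\mathcal{G}^j$ and $\mathcal{G}_L$ connected; (A4) $F$ is $\eta$-strongly monotone and $\kappa_0$-Lipschitz; (A5) $\mathrm{GVI}(\Theta,\mathcal{K})$ has a solution; (A6) $\boldsymbol{F}$ is $\kappa$-Lipschitz; (A7) $\Psi\succ0$ and $\|\Psi^{-1}\|<1/\ell_{\mathcal{A}}$. *)

(* Defs.v *)
From HB Require Import structures.
From mathcomp Require Import all_boot all_order all_algebra.
From mathcomp Require Import all_classical all_reals all_analysis.
Import Order.TTheory GRing.Theory Num.Theory.
Import numFieldNormedType.Exports.

Set Implicit Arguments.
Unset Strict Implicit.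
Unset Printing Implicit Defensive.

Local Open Scope classical_set_scope.
Local Open Scope ring_scope.

Section Generic.
Variable R : realType.

Definition mdot a b (X Y : 'M[R]_(a, b)) : R := \sum_i \sum_k X i k * Y i k.

Definition grad a b (g : 'M[R]_(a, b) -> R) (X : 'M[R]_(a, b)) : 'M[R]_(a, b) :=
  \matrix_(i, k) ('d g X (delta_mx i k)).

Definition convex_fun a b (g : 'M[R]_(a, b) -> R) :=
  forall X Y (t : R), 0 <= t <= 1 ->
    g (t *: X + (1 - t) *: Y) <= t * g X + (1 - t) * g Y.

Definition econvex_fun a b (g : 'M[R]_(a, b) -> \bar R) :=
  forall X Y (t : R), 0 <= t <= 1 ->
    (g (t *: X + (1 - t) *: Y)%R <= t%:E * g X + (1 - t)%:E * g Y)%E.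

Definition convex_setM a b (C : set 'M[R]_(a, b)) :=
  forall X Y (t : R), C X -> C Y -> 0 <= t <= 1 -> C (t *: X + (1 - t) *: Y).

Definition edom a b (g : 'M[R]_(a, b) -> \bar R) : set 'M[R]_(a, b) :=
  [set X | (g X < +oo)%E].

Definition subdiff a b (g : 'M[R]_(a, b) -> \bar R) (X G : 'M[R]_(a, b)) :=
  (g X < +oo)%E /\ forall Y, (g X + (mdot G (Y - X)%R)%:E <= g Y)%E.

Definition aff_hull a b (C : set 'M[R]_(a, b)) : set 'M[R]_(a, b) :=
  [set Y | exists (N : nat) (p : 'I_N -> 'M[R]_(a, b)) (t : 'I_N -> R),
      (forall k, C (p k)) /\ \sum_k t k = 1 /\ Y = \sum_k t k *: p k].

Definition relint a b (C : set 'M[R]_(a, b)) : set 'M[R]_(a, b) :=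
  [set X | C X /\ exists2 e : R, 0 < e &
      forall Y, aff_hull C Y -> Num.sqrt (mdot (Y - X) (Y - X)) < e -> C Y].

Definition normal_cone a b (C : set 'M[R]_(a, b)) (X V : 'M[R]_(a, b)) :=
  C X /\ forall Y, C Y -> mdot V (Y - X) <= 0.

Definition orthant a b : set 'M[R]_(a, b) := [set X | forall i k, 0 <= X i k].

Definition wgraph k (Wt : 'I_k -> 'I_k -> R) :=
  (forall i l, Wt i l = Wt l i) /\ (forall i l, 0 <= Wt i l).

Definition wconnected k (Wt : 'I_k -> 'I_k -> R) :=
  forall i l, connect [rel x y | 0 < Wt x y] i l.

Definition laplacian k (Wt : 'I_k -> 'I_k -> R) : 'M[R]_k :=
  \matrix_(i, l) (if i == l then \sum_(r | r != i) Wt i r else - Wt i l).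

Definition is_smax k (M : 'M[R]_k) (s : R) :=
  eigenvalue M s /\ forall t, eigenvalue M t -> t <= s.

(* leader (= first agent, index 0) row of a matrix whose rows are agents *)
Definition lead a b (X : 'M[R]_(a, b)) : 'rV[R]_b :=
  \sum_(i : 'I_a | val i == 0%N) row i X.

End Generic.

(* m clusters, cluster j has n j agents, each with decision in R^(qd j)*)
(* the decision x^j of cluster j is the matrix 'M_(n j, qd j) whose    *)
(* row i is x_i^j; coupling constraints live in R^w, written as rows.  *)
Section Game.
Variable R : realType.
Variables (m : nat) (n qd : 'I_m -> nat) (w : nat).

Definition prof := forall j : 'I_m, 'M[R]_(n j, qd j).
Definition others (j : 'I_m) := forall l : 'I_m, l != j -> 'M[R]_(n l, qd l).
Definition minus (x : prof) (j : 'I_m) : others j := fun l _ => x l.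
Arguments minus x j : clear implicits.
(* R^{nq} : stacked estimates, agent (j,i) holds a profile *)
Definition xhat_t := forall j : 'I_m, 'I_(n j) -> prof.
Definition wm_t := 'I_m -> 'rV[R]_w.

Definition padd (x y : prof) : prof := fun j => x j + y j.
Definition popp (x : prof) : prof := fun j => - x j.
Definition pzero : prof := fun j => 0.
Definition pdot (x y : prof) : R := \sum_j mdot (x j) (y j).

Definition xadd (X Y : xhat_t) : xhat_t := fun j i => padd (X j i) (Y j i).
Definition xopp (X : xhat_t) : xhat_t := fun j i => popp (X j i).
Definition xscale (c : R) (X : xhat_t) : xhat_t := fun j i l => c *: X j i l.
Definition xzero : xhat_t := fun j i => pzero.
Definition xdot (X Y : xhat_t) : R := \sum_j \sum_i pdot (X j i) (Y j i).

Definition wadd (u v : wm_t) : wm_t := fun j => u j + v j.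
Definition wopp (u : wm_t) : wm_t := fun j => - u j.
Definition wzero : wm_t := fun j => 0.
Definition wdot (u v : wm_t) : R := \sum_j mdot (u j) (v j).

Definition at_block (j : 'I_m) (Y : 'M[R]_(n j, qd j)) : prof :=
  fun l => match j =P l with
           | ReflectT e => eq_rect j (fun l => 'M[R]_(n l, qd l)) Y l e
           | ReflectF _ => 0
           end.

(* R : extracts x_i^j from the estimate of agent (j,i);  R xhat = x *)
Definition Rop (X : xhat_t) : prof := fun j => \matrix_(i, k) X j i j i k.
Definition RT (v : prof) : xhat_t :=
  fun j i => at_block (\matrix_(a, k) (if a == i then v j a k else 0)).

Section Data.
Unset Implicit Arguments.
Variable W : forall j : 'I_m, 'I_(n j) -> 'I_(n j) -> R.
Variable W0 : 'I_m -> 'I_m -> R.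
Variable f : forall j : 'I_m, 'I_(n j) -> 'M[R]_(n j, qd j) -> others j -> R.
Variable h : forall j : 'I_m, 'I_(n j) -> 'rV[R]_(qd j) -> \bar R.
Variable A : forall j : 'I_m, 'M[R]_(w, qd j).
Variable bj : wm_t.

Set Implicit Arguments.

Definition bsum : 'rV[R]_w := \sum_j bj j.

(* bold L = blockdiag(L^j (x) I_{q_j}) and its transpose *)
Definition bL (x : prof) : prof := fun j => laplacian (W j) *m x j.
Definition bLT (x : prof) : prof := fun j => (laplacian (W j))^T *m x j.
Definition Lbig : 'M[R]_(\sum_j n j) := \mxdiag_(j < m) laplacian (W j).
Definition L0 : 'M[R]_m := laplacian W0.
(* hat L = L (x) I_q *)
Definition Lhat (X : xhat_t) : xhat_t :=
  fun j i l => \sum_k (laplacian (W j)) i k *: X j k l.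
(* hat L^0_m (x) I_q : acts only between leaders *)
Definition L0hat (X : xhat_t) : xhat_t :=
  fun j i l => if val i == 0%N then
     \sum_(j' : 'I_m) \sum_(k : 'I_(n j') | val k == 0%N) L0 j j' *: X j' k l
   else 0.
(* bold L^0_m = L^0_m (x) I_w *)
Definition bL0 (u : wm_t) : wm_t := fun j => \sum_l L0 j l *: u l.

Definition Lam (x : prof) : wm_t := fun j => lead (x j) *m (A j)^T.
Definition LamT (u : wm_t) : prof :=
  fun j => \matrix_(i, k) (if val i == 0%N then (u j *m A j) 0 k else 0).
Definition bA (x : prof) : 'rV[R]_w := \sum_j lead (x j) *m (A j)^T.
Definition bAT (mu : 'rV[R]_w) : prof :=
  fun j => \matrix_(i, k) (if val i == 0%N then (mu *m A j) 0 k else 0).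

Definition Fpg (x : prof) : prof :=
  fun j => grad (fun Y => \sum_i f j i Y (minus x j)) (x j).
Definition BF (X : xhat_t) : prof :=
  fun j => grad (fun Y => \sum_i f j i Y (minus (X j i) j)) (Rop X j).

Definition hj (j : 'I_m) (Y : 'M[R]_(n j, qd j)) : \bar R :=
  (\sum_i h j i (row i Y))%E.
Definition Hset (x v : prof) := forall j, subdiff (@hj j) (x j) (v j).

Definition Omega j i : set 'rV[R]_(qd j) := edom (h j i).
Arguments Omega j i : clear implicits.
Definition Kset (x : prof) :=
  (forall j i, Omega j i (row i (x j))) /\
  (forall k, bA x 0 k <= bsum 0 k) /\
  (forall j i l, row i (x j) = row l (x j)).
Definition GVI_sol (x : prof) :=
  Kset x /\ exists v, Hset x v /\
    forall y, Kset y -> 0 <= pdot (padd (Fpg x) v) (padd y (popp x)).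

Definition orthant_wm (u : wm_t) := forall j k, 0 <= u j 0 k.
Definition ncone_wm (mu v : wm_t) :=
  orthant_wm mu /\ forall y, orthant_wm y -> wdot v (wadd y (wopp mu)) <= 0.

Definition pw := (xhat_t * wm_t * prof * wm_t)%type.
Definition pw_add (p1 p2 : pw) : pw :=
  let: (x1, z1, l1, m1) := p1 in let: (x2, z2, l2, m2) := p2 in
  (xadd x1 x2, wadd z1 z2, padd l1 l2, wadd m1 m2).
Definition pw_zero : pw := (xzero, wzero, pzero, wzero).

Definition Aop (c : R) (p : pw) : pw :=
  let: (X, z, lam, mu) := p in
  ( xadd (xadd (xadd (RT (BF X)) (xscale c (xadd (Lhat X) (L0hat X))))
               (RT (bLT lam))) (RT (LamT mu)),
    bL0 mu,
    popp (bL (Rop X)),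
    wadd (wadd bj (wopp (Lam (Rop X)))) (wopp (bL0 z)) ).

Definition Bop (p q : pw) :=
  let: (X, z, lam, mu) := p in
  let: (X', z', lam', mu') := q in
  (exists v, Hset (Rop X) v /\ X' = RT v) /\ z' = wzero /\ lam' = pzero /\
  ncone_wm mu mu'.

Definition zer_AB (c : R) (p : pw) := exists q, Bop p q /\ pw_add (Aop c p) q = pw_zero.

Definition Psi_inv (rho tau : forall j : 'I_m, 'I_(n j) -> R) (sig nu : 'I_m -> R)
  (p : pw) : pw :=
  let: (X, z, lam, mu) := p in
  (fun j i l => rho j i *: X j i l,
   fun j => sig j *: z j,
   fun j => \matrix_(i, k) (tau j i * lam j i k),
   fun j => nu j *: mu j).
Definition pw_norm (p : pw) : R :=
  let: (X, z, lam, mu) := p in Num.sqrt (xdot X X + wdot z z + pdot lam lam + wdot mu mu).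
Definition is_opnorm (T : pw -> pw) (c : R) :=
  0 <= c /\ (forall p, pw_norm (T p) <= c * pw_norm p) /\
  (forall c', 0 <= c' -> (forall p, pw_norm (T p) <= c' * pw_norm p) -> c <= c').

End Data.
End Game.

Arguments pzero {R m n qd}.
Arguments xzero {R m n qd}.
Arguments wzero {R m w}.
Arguments RT {R m n qd} v.
Arguments minus {R m n qd} x j.
Arguments at_block {R m n qd j} Y.

(* Main.v *)
Require Import Defs.
From HB Require Import structures.
From mathcomp Require Import all_boot all_order all_algebra.
From mathcomp Require Import all_classical all_reals all_analysis.
From mathcomp Require Import ring lra.
Import Order.TTheory GRing.Theory Num.Theory.
Import numFieldNormedType.Exports.
Local Open Scope classical_set_scope.
Local Open Scope ring_scope.
Set Implicit Arguments.
Unset Strict Implicit.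

Section Lap.
Variables (R : realType) (k : nat) (Wt : 'I_k -> 'I_k -> R).
Hypothesis Hs : forall i l, Wt i l = Wt l i.

Lemma lap_sym i l : laplacian Wt i l = laplacian Wt l i.
Proof. rewrite !mxE eq_sym; case: eqP => [->//|_]; by rewrite Hs. Qed.

Lemma lap_row i : \sum_l laplacian Wt i l = 0.
Proof.
rewrite (bigD1 i) //= mxE eqxx [X in _ + X](eq_bigr (fun l => - Wt i l)).
  by rewrite sumrN addrN.
by move=> l ne; rewrite mxE eq_sym (negbTE ne).
Qed.

Lemma lap_col l : \sum_i laplacian Wt i l = 0.
Proof. under eq_bigr do rewrite lap_sym. exact: lap_row. Qed.

Lemma lap_apply (x : 'I_k -> R) i :
  \sum_l laplacian Wt i l * x l = \sum_l Wt i l * (x i - x l).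
Proof.
rewrite (bigD1 i) //= mxE eqxx [RHS](bigD1 i) //= subrr mulr0 add0r mulr_suml.
rewrite -big_split /=; apply: eq_bigr => l ne; rewrite mxE eq_sym (negbTE ne).
ring.
Qed.

Definition quad (x : 'I_k -> R) := \sum_i x i * \sum_l laplacian Wt i l * x l.

Lemma lap_quad x : quad x + quad x = \sum_i \sum_l Wt i l * (x i - x l) ^+ 2.
Proof.
have E : quad x = \sum_i \sum_l Wt i l * (x i * (x i - x l)).
  apply: eq_bigr => i _; rewrite lap_apply mulr_sumr; apply: eq_bigr => l _; ring.
have E' : quad x = \sum_i \sum_l Wt i l * (x l * (x l - x i)).
  rewrite E exchange_big; apply: eq_bigr => i _; apply: eq_bigr => l _.
  by rewrite Hs.
rewrite {1}E E' -big_split; apply: eq_bigr => i _; rewrite -big_split.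
apply: eq_bigr => l _. rewrite /=; ring.
Qed.

Hypothesis Hp : forall i l, 0 <= Wt i l.

Lemma quad_ge0 x : 0 <= quad x.
Proof.
have : 0 <= quad x + quad x.
  rewrite lap_quad; apply: sumr_ge0 => i _; apply: sumr_ge0 => l _.
  by rewrite mulr_ge0 // sqr_ge0.
lra.
Qed.

Hypothesis Hc : wconnected Wt.

Lemma quad_eq0 x : quad x = 0 -> forall i l, x i = x l.
Proof.
move=> Q0.
have S0 : \sum_i \sum_l Wt i l * (x i - x l) ^+ 2 = 0 by rewrite -lap_quad Q0 addr0.
have Hedge : forall i l, 0 < Wt i l -> x i = x l.
  move=> i l Hil.
  have S1 := psumr_eq0P _ S0.
  have S2 : \sum_l Wt i l * (x i - x l) ^+ 2 = 0.
    apply: S1 => // i' _; apply: sumr_ge0 => l' _; by rewrite mulr_ge0 // sqr_ge0.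
  have := psumr_eq0P (fun l' _ => mulr_ge0 (Hp i l') (sqr_ge0 _)) S2 (i:=l) isT.
  move/eqP.
  rewrite mulf_eq0 (gt_eqF Hil) /= sqrf_eq0 subr_eq0 => /eqP //.
move=> i l; move: (Hc i l) => /connectP [p Hpth ->].
elim: p i Hpth => //= y p IH i /andP [Hiy Hpth].
by rewrite (Hedge _ _ Hiy) (IH _ Hpth).
Qed.

End Lap.

Section Game.
Variables (R : realType) (m : nat) (n qd : 'I_m -> nat).

Lemma at_block_id (j : 'I_m) (Y : 'M[R]_(n j, qd j)) : at_block (n:=n) Y j = Y.
Proof.
rewrite /at_block; case: (j =P j) => [e|/(_ erefl)//].
by rewrite (eq_axiomK e).
Qed.

Lemma at_block_ne (j l : 'I_m) (Y : 'M[R]_(n j, qd j)) : j != l -> at_block (n:=n) Y l = 0.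
Proof. move=> /negP ne; rewrite /at_block; case: (j =P l) => // e; by case: ne; apply/eqP. Qed.

Lemma RT_self (v : prof R n qd) j i a b : RT v j i j a b = if a == i then v j a b else 0.
Proof. by rewrite /RT at_block_id mxE. Qed.

Lemma RT_ne (v : prof R n qd) j i l : j != l -> RT v j i l = 0.
Proof. by move=> ne; rewrite /RT at_block_ne. Qed.

Lemma RT_add (v1 v2 : prof R n qd) j i l :
  RT v1 j i l + RT v2 j i l = RT (padd v1 v2) j i l.
Proof.
case: (eqVneq j l) => [<-|ne]; last by rewrite !RT_ne // addr0.
apply/matrixP => a b; rewrite mxE (RT_self v1) (RT_self v2) (RT_self (padd v1 v2)).
rewrite /padd mxE; case: (a == i) => //; by rewrite addr0.
Qed.

Lemma RT_zero (v : prof R n qd) j i l :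
  (forall l a b, v l a b = 0) -> RT v j i l = 0.
Proof.
move=> H; case: (eqVneq j l) => [<-|ne]; last by rewrite !RT_ne.
apply/matrixP => a b; rewrite (RT_self v) H mxE; by case: (a == i).
Qed.

Lemma sum_RT (v : prof R n qd) l a b : \sum_j \sum_i RT v j i l a b = v l a b.
Proof.
rewrite (bigD1 l) //= [X in _ + X]big1 ?addr0.
  under eq_bigr => i _ do rewrite (RT_self v).
  rewrite (bigD1 a) //= eqxx big1 ?addr0 // => i /negbTE.
  by rewrite eq_sym => ->.
move=> j ne; apply: big1 => i _; by rewrite RT_ne ?mxE.
Qed.

Lemma sum_lead p (i0 : 'I_p) (F : 'I_p -> R) : val i0 = 0%N ->
  \sum_(k | val k == 0%N) F k = F i0.
Proof.
move=> h0; rewrite (bigD1 i0) ?h0 //= big1 ?addr0 // => k /andP [/eqP hk ne].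
have E : k = i0 by apply: ord_inj; rewrite hk h0.
by move: ne; rewrite E eqxx.
Qed.

Lemma consensus (W : forall j : 'I_m, 'I_(n j) -> 'I_(n j) -> R) (W0 : 'I_m -> 'I_m -> R)
  (y : forall j, 'I_(n j) -> R) :
  (forall j, (0 < n j)%N) ->
  (forall j, wgraph (W j) /\ wconnected (W j)) -> wgraph W0 /\ wconnected W0 ->
  (forall j i, \sum_k laplacian (W j) i k * y j k +
     (if val i == 0%N then \sum_j' \sum_(k | val k == 0%N) laplacian W0 j j' * y j' k
      else 0) = 0) ->
  forall j i j' i', y j i = y j' i'.
Proof.
move=> Hn HW [[HW0s HW0p] HW0c] H.
pose Y0 j := \sum_(k | val k == 0%N) y j k.
have T0 : \sum_j quad (W j) (y j) + quad W0 Y0 = 0.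
  have -> : quad W0 Y0 = \sum_j \sum_i y j i *
       (if val i == 0%N then \sum_j' \sum_(k | val k == 0%N) laplacian W0 j j' * y j' k
      else 0).
    rewrite /quad; apply: eq_bigr => j _; rewrite {1}/Y0 mulr_suml big_mkcond /=.
    apply: eq_bigr => i _; case: ifP => _; last by rewrite mulr0.
    congr (_ * _); apply: eq_bigr => j' _; by rewrite mulr_sumr.
  rewrite -big_split /=; apply: big1 => j _.
  rewrite /quad -big_split /=; apply: big1 => i _.
  by rewrite -mulrDr H mulr0.
have Hq : forall j, 0 <= quad (W j) (y j).
  move=> j; case: (HW j) => [[Hs Hp] _]; exact: quad_ge0.
have HQ0 : 0 <= quad W0 Y0 by exact: quad_ge0.
have Hs0 : 0 <= \sum_j quad (W j) (y j) by apply: sumr_ge0 => j _.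
have Q0 : quad W0 Y0 = 0 by lra.
have QS : \sum_j quad (W j) (y j) = 0 by lra.
have Hin : forall j i i', y j i = y j i'.
  move=> j; case: (HW j) => [[Hs Hp] Hc]; apply: quad_eq0 => //.
  exact: (psumr_eq0P (fun j _ => Hq j) QS).
have HY : forall j j', Y0 j = Y0 j' by exact: quad_eq0 Q0.
have HY0 : forall j i, Y0 j = y j i.
  move=> j i; rewrite /Y0 (sum_lead _ (i0 := Ordinal (Hn j))) //; exact: Hin.
by move=> j i j' i'; rewrite -(HY0 j i) (HY j j') (HY0 j' i').
Qed.

End Game.

Section Mdot.
Variables (R : realType) (a b : nat).
Implicit Types X Y Z : 'M[R]_(a, b).

Lemma mdotC X Y : mdot X Y = mdot Y X.
Proof. rewrite /mdot; apply: eq_bigr => i _; apply: eq_bigr => k _; by rewrite mulrC. Qed.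

Lemma mdotDr X Y Z : mdot X (Y + Z) = mdot X Y + mdot X Z.
Proof.
rewrite /mdot -big_split; apply: eq_bigr => i _; rewrite -big_split.
apply: eq_bigr => k _; by rewrite mxE mulrDr.
Qed.

Lemma mdotNr X Y : mdot X (- Y) = - mdot X Y.
Proof.
rewrite /mdot -sumrN; apply: eq_bigr => i _; rewrite -sumrN.
apply: eq_bigr => k _; by rewrite mxE mulrN.
Qed.

Lemma mdotDl X Y Z : mdot (Y + Z) X = mdot Y X + mdot Z X.
Proof. by rewrite mdotC mdotDr !(mdotC X). Qed.

Lemma mdotNl X Y : mdot (- Y) X = - mdot Y X.
Proof. by rewrite mdotC mdotNr mdotC. Qed.

Lemma mdotBr X Y Z : mdot X (Y - Z) = mdot X Y - mdot X Z.
Proof. by rewrite mdotDr mdotNr. Qed.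

Lemma mdot0r X : mdot X 0 = 0.
Proof. by apply: big1 => i _; apply: big1 => k _; rewrite mxE mulr0. Qed.

Lemma mdot_suml (I : finType) (F : I -> 'M[R]_(a, b)) Y :
  mdot (\sum_j F j) Y = \sum_j mdot (F j) Y.
Proof.
rewrite /mdot [RHS]exchange_big; apply: eq_bigr => i _.
rewrite [RHS]exchange_big; apply: eq_bigr => k _.
by rewrite summxE mulr_suml.
Qed.

Lemma mdot_delta X i k : mdot X (delta_mx i k) = X i k.
Proof.
rewrite /mdot (bigD1 i) //= [X in _ + X]big1 ?addr0.
  rewrite (bigD1 k) //= [X in _ + X]big1 ?addr0.
    by rewrite mxE !eqxx mulr1.
  by move=> k' ne; rewrite mxE eqxx (negbTE ne) mulr0.
by move=> i' ne; apply: big1 => k' _; rewrite mxE (negbTE ne) mulr0.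
Qed.

End Mdot.

Section Lap2.
Variables (R : realType) (k q : nat) (Wt : 'I_k -> 'I_k -> R).
Hypothesis Hs : forall i l, Wt i l = Wt l i.

Lemma lap_mdot (Lm D : 'M[R]_(k, q)) : (forall i l c, D i c = D l c) ->
  mdot (laplacian Wt *m Lm) D = 0.
Proof.
move=> HD; rewrite /mdot exchange_big; apply: big1 => c _.
under eq_bigr => i _ do rewrite mxE mulr_suml.
rewrite exchange_big; apply: big1 => l _.
under eq_bigr => i _ do rewrite (HD i l) -mulrA.
by rewrite -mulr_suml lap_col // mul0r.
Qed.

Lemma lapT : (laplacian Wt)^T = laplacian Wt.
Proof. apply/matrixP => i l; by rewrite mxE lap_sym. Qed.

End Lap2.

Section Coord.
Variables (R : realType) (m : nat) (n qd : 'I_m -> nat).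
Variables (W : forall j : 'I_m, 'I_(n j) -> 'I_(n j) -> R) (W0 : 'I_m -> 'I_m -> R).
Arguments W : clear implicits.

Lemma Lhat_coord (X : xhat_t R n qd) j i l a b :
  (@Lhat R m n qd W X j i l) a b = \sum_(k : 'I_(n j)) (laplacian (W j)) i k * X j k l a b.
Proof. by rewrite /Lhat summxE; apply: eq_bigr => k _; rewrite mxE. Qed.

Lemma L0hat_coord (X : xhat_t R n qd) j i l a b :
  (@L0hat R m n qd W0 X j i l) a b = if val i == 0%N then
     \sum_j' \sum_(k | val k == 0%N) laplacian W0 j j' * X j' k l a b else 0.
Proof.
rewrite /L0hat; case: ifP => _; last by rewrite mxE.
rewrite summxE; apply: eq_bigr => j' _; rewrite summxE; apply: eq_bigr => k _.
by rewrite mxE.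
Qed.

Lemma Lhat_sum (X : xhat_t R n qd) l a b :
  (forall j i k, W j i k = W j k i) ->
  \sum_j \sum_i (@Lhat R m n qd W X j i l) a b = 0.
Proof.
move=> Hs; apply: big1 => j _; under eq_bigr do rewrite Lhat_coord.
rewrite exchange_big; apply: big1 => k _; by rewrite -mulr_suml lap_col ?mul0r.
Qed.

Lemma L0hat_sum (X : xhat_t R n qd) l a b :
  (forall j, (0 < n j)%N) -> (forall i k, W0 i k = W0 k i) ->
  \sum_j \sum_i (@L0hat R m n qd W0 X j i l) a b = 0.
Proof.
move=> Hn Hs.
pose Y j' := \sum_(k : 'I_(n j') | val k == 0%N) X j' k l a b.
have E : forall j, \sum_i (@L0hat R m n qd W0 X j i l) a b = \sum_j' laplacian W0 j j' * Y j'.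
  move=> j; under eq_bigr do rewrite L0hat_coord.
  rewrite -big_mkcond /= (sum_lead _ (i0 := Ordinal (Hn j))) //.
  apply: eq_bigr => j' _; by rewrite /Y mulr_sumr.
under eq_bigr do rewrite E.
rewrite exchange_big; apply: big1 => k _; by rewrite -mulr_suml lap_col ?mul0r.
Qed.

End Coord.

Section BA.
Variables (R : realType) (m : nat) (n qd : 'I_m -> nat) (w : nat).
Variable (A : forall j : 'I_m, 'M[R]_(w, qd j)).

Lemma bA_sub (y x : prof R n qd) : bA A (padd y (popp x)) = bA A y - bA A x.
Proof.
rewrite /bA -sumrB; apply: eq_bigr => j _; rewrite -mulmxBl; congr (_ *m _).
rewrite /lead -sumrB; apply: eq_bigr => i _; apply/rowP => k; by rewrite !mxE.
Qed.

Lemma pdot_bAT (mu : 'rV[R]_w) (D : prof R n qd) :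
  \sum_j mdot (bAT n A mu j) (D j) = mdot mu (bA A D).
Proof.
rewrite /bA mdotC mdot_suml; apply: eq_bigr => j _; rewrite [RHS]mdotC.
rewrite /mdot big_ord1 [LHS]exchange_big /=.
transitivity (\sum_k (mu *m A j) 0 k * lead (D j) 0 k).
  apply: eq_bigr => k _; rewrite /lead summxE mulr_sumr [RHS]big_mkcond /=.
  apply: eq_bigr => i _; rewrite !mxE; case: ifP => _; by rewrite ?mul0r.
rewrite [LHS](eq_bigr (fun k => \sum_r mu 0 r * A j r k * lead (D j) 0 k)); last first.
  by move=> k _; rewrite mxE mulr_suml.
rewrite [LHS]exchange_big; apply: eq_bigr => r _; rewrite mxE mulr_sumr.
apply: eq_bigr => k' _; rewrite !mxE; ring.
Qed.

End BA.

Unset Implicit Arguments.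
Set Strict Implicit.

Theorem theorem2 (R : realType) (m : nat) (n qd : 'I_m -> nat) (w : nat)
  (W : forall j : 'I_m, 'I_(n j) -> 'I_(n j) -> R) (W0 : 'I_m -> 'I_m -> R)
  (f : forall j : 'I_m, 'I_(n j) -> 'M[R]_(n j, qd j) -> others R n qd j -> R)
  (h : forall j : 'I_m, 'I_(n j) -> 'rV[R]_(qd j) -> \bar R)
  (A : forall j : 'I_m, 'M[R]_(w, qd j)) (bj : wm_t R m w)
  (c : R) (rho tau : forall j : 'I_m, 'I_(n j) -> R) (sig nu : 'I_m -> R)
  (eta kappa0 kappa : R)
  (Xs : xhat_t R n qd) (zs : wm_t R m w) (lams : prof R n qd) (mus : wm_t R m w) :
  (* standing setting *)
  (forall j, (0 < n j)%N) -> (forall j, (0 < qd j)%N) ->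
  0 < c ->
  (forall j i, 0 < rho j i) -> (forall j i, 0 < tau j i) ->
  (forall j, 0 < sig j) -> (forall j, 0 < nu j) ->
  (* (A1) *)
  (forall j i (y : others R n qd j),
     (forall X, differentiable (fun Y => f j i Y y) X) /\
     continuous (grad (fun Y => f j i Y y)) /\
     convex_fun (fun Y => f j i Y y)) ->
  (forall j i,
     lower_semicontinuous (h j i) /\ econvex_fun (h j i) /\
     (forall y, h j i y != -oo)%E /\
     edom (h j i) !=set0 /\ compact (edom (h j i)) /\ convex_setM (edom (h j i))) ->
  (* (A2) *)
  (exists x, Kset h A bj x) ->
  (exists x, Kset h A bj x /\ forall j i, relint (Omega h i) (row i (x j))) ->
  (* (A3) *)
  (forall j, wgraph (W j) /\ wconnected (W j)) ->
  wgraph W0 /\ wconnected W0 ->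
  (* (A4) *)
  0 < eta ->
  (forall x y, eta * pdot (padd x (popp y)) (padd x (popp y))
                <= pdot (padd (Fpg f x) (popp (Fpg f y))) (padd x (popp y))) ->
  0 <= kappa0 ->
  (forall x y,
     Num.sqrt (pdot (padd (Fpg f x) (popp (Fpg f y))) (padd (Fpg f x) (popp (Fpg f y))))
       <= kappa0 * Num.sqrt (pdot (padd x (popp y)) (padd x (popp y)))) ->
  (* (A5) *)
  (exists x, GVI_sol f h A bj x) ->
  (* (A6) *)
  0 <= kappa ->
  (forall X Y,
     Num.sqrt (pdot (padd (BF f X) (popp (BF f Y))) (padd (BF f X) (popp (BF f Y))))
       <= kappa * Num.sqrt (xdot (xadd X (xopp Y)) (xadd X (xopp Y)))) ->
  (* (A7) *)
  (exists (sL sL0 : R) (sA : 'I_m -> R) (cn : R),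
     is_smax (Lbig W) sL /\ is_smax (L0 W0) sL0 /\
     (forall j, is_smax ((A j)^T *m A j) (sA j)) /\
     is_opnorm (@Psi_inv R m n qd w rho tau sig nu) cn /\
     cn < 1 / (kappa + c * (sL + sL0) + 2 * sL + 2 * sL0
               + 2 * \big[Num.max/0]_(j < m) Num.sqrt (sA j))) ->
  (* varpi* in zer(A + B) *)
  zer_AB W W0 f h A bj c (Xs, zs, lams, mus) ->
  exists (xs : prof R n qd) (mu : 'rV[R]_w),
    (forall j i, Xs j i = xs) /\ (forall j, mus j = mu) /\
    (* partial-information KKT conditions *)
    (exists v, Hset h (Rop Xs) v /\
       xadd (xadd (xadd (RT (BF f Xs)) (RT v)) (RT (bL W lams))) (RT (LamT n A mus))
         = xzero) /\
    (exists v, normal_cone (@orthant R 1 w) mu v /\ bsum bj - bA A (Rop Xs) + v = 0) /\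
    bL W (Rop Xs) = pzero /\
    (* full-information KKT conditions *)
    (exists v, Hset h xs v /\
       padd (padd (padd (Fpg f xs) v) (bL W lams)) (bAT n A mu) = pzero) /\
    (exists v, normal_cone (@orthant R 1 w) mu v /\ bsum bj - bA A xs + v = 0) /\
    bL W xs = pzero /\
    (* x* solves GVI(Theta, K), i.e. is a v-GNE *)
    GVI_sol f h A bj xs.
Proof.
move=> Hn Hq Hc Hrho Htau Hsig Hnu Hf Hh _ _ HW HW0 _ _ _ _ _ _ _ _ Hz.
case: Hz => [[[[X' z'] lam'] mu']] [[[v [Hv ->]] [-> [-> Hnc]]] E].
move: E; rewrite /pw_add /Aop /pw_zero /=; case=> E1 E2 E3 E4.
have HWs : forall j i k, W j i k = W j k i by move=> j; case: (HW j) => [[]].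
have HW0s : forall i k, W0 i k = W0 k i by case: HW0 => [[]].
have E1c : forall j i l a b,
   RT (BF f Xs) j i l a b + c * ((@Lhat R m n qd W Xs j i l) a b + (@L0hat R m n qd W0 Xs j i l) a b)
   + RT (bLT W lams) j i l a b + RT (LamT n A mus) j i l a b + RT v j i l a b = 0.
  move=> j i l a b; move: (congr1 (fun F : xhat_t R n qd => F j i l a b) E1).
  by rewrite /xadd /padd /xscale /xzero /pzero /= !mxE.
have HbLT : bLT W lams = bL W lams.
  apply: functional_extensionality_dep => j; by rewrite /bLT /bL lapT.
rewrite HbLT in E1c.
have Hu : forall l a b, BF f Xs l a b + bL W lams l a b + LamT n A mus l a b + v l a b = 0.
  move=> l a b.
  pose G := fun j (i : 'I_(n j)) =>  RT (BF f Xs) j i l a b + c * ((@Lhat R m n qd W Xs j i l) a b + (@L0hat R m n qd W0 Xs j i l) a b)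
   + RT (bL W lams) j i l a b + RT (LamT n A mus) j i l a b + RT v j i l a b.
  have H0 : \sum_j \sum_i G j i = 0.
    by apply: big1 => j _; apply: big1 => i _; exact: E1c.
  move: H0; rewrite /G.
  under eq_bigr => j _ do rewrite !big_split /= -mulr_sumr big_split /=.
  rewrite !big_split /= -mulr_sumr big_split /= !sum_RT Lhat_sum // L0hat_sum //.
  by rewrite addr0 mulr0 addr0.
have HRTu : forall j i l, RT (BF f Xs) j i l + RT (bL W lams) j i l + RT (LamT n A mus) j i l + RT v j i l = 0.
  move=> j i l; rewrite !RT_add; apply: RT_zero => l' a b; by move: (Hu l' a b); rewrite /padd !mxE.
have LX : forall j i l a b, (@Lhat R m n qd W Xs j i l) a b + (@L0hat R m n qd W0 Xs j i l) a b = 0.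
  move=> j i l a b; have H2 := E1c j i l a b.
  have := congr1 (fun M : 'M[R]_(n l, qd l) => M a b) (HRTu j i l); rewrite !mxE => H1.
  apply: (mulfI (lt0r_neq0 Hc)); rewrite mulr0; lra.
have Hcons : forall l a b j i j' i', Xs j i l a b = Xs j' i' l a b.
  move=> l a b; apply: (consensus (W:=W) (W0:=W0) (y := fun j i => Xs j i l a b)) => // j i.
  by have := LX j i l a b; rewrite Lhat_coord L0hat_coord.
pose xs := Rop Xs.
have HX : forall j i, Xs j i = xs.
  move=> j i; apply: functional_extensionality_dep => l; apply/matrixP => a b.
  rewrite /xs /Rop mxE; exact: Hcons.
have HE2 : forall j, \sum_l laplacian W0 j l *: mus l = 0.
  move=> j; have := congr1 (fun F : wm_t R m w => F j) E2.
  by rewrite /wadd /wzero /bL0 addr0.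
have Hmucons : forall j l k, mus j 0 k = mus l 0 k.
  move=> j l k.
  have Hq0 : quad W0 (fun j => mus j 0 k) = 0.
    apply: big1 => j' _; move: (congr1 (fun M : 'rV[R]_w => M 0 k) (HE2 j')).
    rewrite summxE; under eq_bigr do rewrite mxE.
    by rewrite mxE => ->; rewrite mulr0.
  by apply: (quad_eq0 HW0s HW0.1.2 HW0.2 Hq0).
pose mu := (m%:R)^-1 *: \sum_j mus j.
have Hmu : forall j, mus j = mu.
  move=> j; apply/rowP => k; rewrite /mu mxE summxE.
  rewrite (eq_bigr (fun _ => mus j 0 k)); last by move=> l _; rewrite (Hmucons l j).
  rewrite sumr_const card_ord -[mus j 0 k *+ m]mulr_natr mulrCA mulVf ?mulr1 // pnatr_eq0 -lt0n.
  exact: (leq_ltn_trans (leq0n _) (ltn_ord j)).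
have HbL : bL W xs = pzero.
  apply: functional_extensionality_dep => j.
  have := congr1 (fun F : prof R n qd => F j) E3.
  rewrite /padd /popp /pzero addr0 => /eqP; by rewrite oppr_eq0 => /eqP.
have HE4 : forall j, bj j - Lam A xs j - bL0 W0 zs j + mu' j = 0.
  move=> j; have := congr1 (fun F : wm_t R m w => F j) E4; by rewrite /wadd /wopp /wzero.
pose vv := \sum_j mu' j.
have Hsumb : bsum bj - bA A xs + vv = 0.
  have : \sum_j (bj j - Lam A xs j - bL0 W0 zs j + mu' j) = 0.
    by apply: big1 => j _; exact: HE4.
  rewrite !big_split /= !sumrN.
  have -> : \sum_j bL0 W0 zs j = 0.
    rewrite /bL0 exchange_big; apply: big1 => l _.
    by rewrite -scaler_suml lap_col // scale0r.
  by rewrite subr0.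
have NC : normal_cone (@orthant R 1 w) mu vv.
  split.
    move=> i k; rewrite (ord1 i) /mu mxE summxE; apply: mulr_ge0.
      by rewrite invr_ge0 ler0n.
    by apply: sumr_ge0 => j _; exact: Hnc.1.
  move=> Y HY; have := Hnc.2 (fun _ => Y) (fun j k => HY 0 k).
  rewrite /wdot /wadd /wopp; under eq_bigr do rewrite Hmu.
  by rewrite -mdot_suml.
have Hcomp : mdot vv mu = 0.
  have h1 := NC.2 0 (fun i k => eq_ind_r (fun x => 0 <= x) (lexx 0) (mxE _ _ _ _)).
  have h2 : mdot vv (mu + mu - mu) <= 0.
    apply: NC.2 => i k; rewrite mxE; apply: addr_ge0; exact: NC.1.
  rewrite sub0r mdotNr in h1; rewrite addrK in h2; lra.
have HFB : Fpg f xs = BF f Xs.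
  rewrite /Fpg /BF; apply: functional_extensionality_dep => j; congr (grad _ _).
  apply: funext => Y; apply: eq_bigr => i _; by rewrite HX.
have HbAT : bAT n A mu = LamT n A mus.
  rewrite /bAT /LamT; apply: functional_extensionality_dep => j; by rewrite Hmu.
have HK : padd (padd (padd (Fpg f xs) v) (bL W lams)) (bAT n A mu) = pzero.
  rewrite HFB HbAT; apply: functional_extensionality_dep => l; apply/matrixP => a b.
  move: (Hu l a b); rewrite /padd /pzero !mxE; lra.
have HPK : xadd (xadd (xadd (RT (BF f Xs)) (RT v)) (RT (bL W lams))) (RT (LamT n A mus)) = xzero.
  apply: functional_extensionality_dep => j; apply: functional_extensionality_dep => i.
  apply: functional_extensionality_dep => l; rewrite /xadd /padd /xzero /pzero.
  apply/matrixP => a b.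
  move: (congr1 (fun M : 'M[R]_(n l, qd l) => M a b) (HRTu j i l)); rewrite !mxE; lra.
have HKs : Kset h A bj xs.
  split; [|split].
  - move=> j i; rewrite /Omega /edom /=.
    have := (Hv j).1; rewrite /hj !ltey; apply: contra => /eqP Hi.
    rewrite esum_eqy; last by move=> i' _; exact: (Hh j i').2.2.1.
    by apply/existsP; exists i; rewrite /= Hi eqxx.
  - move=> k; have := congr1 (fun M : 'rV[R]_w => M 0 k) Hsumb; rewrite !mxE => H.
    have : vv 0 k <= 0.
      have Hor : orthant (mu + delta_mx 0 k).
        move=> i k'; rewrite [X in 0 <= X]mxE; apply: addr_ge0; first exact: NC.1.
        by rewrite mxE ler0n.
      by have := NC.2 _ Hor; rewrite addrAC subrr add0r mdot_delta.
    lra.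
  - move=> j i l; apply/rowP => k; rewrite !mxE.
    case: (HW j) => [[Hs Hp] Hcj].
    have Hq0 : quad (W j) (fun i => xs j i k) = 0.
      apply: big1 => i' _; move: (congr1 (fun F : prof R n qd => F j i' k) HbL).
      rewrite /bL /pzero !mxE => ->; by rewrite mulr0.
    by have := quad_eq0 Hs Hp Hcj Hq0 i l; rewrite /= /xs !mxE.
exists xs, mu; split; first exact: HX.
split; first exact: Hmu.
split; first by exists v.
split; first by exists vv.
split; first exact: HbL.
split; first by exists v.
split; first by exists vv.
split; first exact: HbL.
split; first exact: HKs.
exists v; split; first exact: Hv.
move=> y Hy.
have HKj : forall j, padd (Fpg f xs) v j = - (bL W lams j + bAT n A mu j).
  move=> j; have := congr1 (fun F : prof R n qd => F j) HK.
  rewrite /padd /pzero -addrA => /eqP; by rewrite addr_eq0 => /eqP.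
rewrite /pdot; under eq_bigr => j _ do rewrite HKj mdotNl mdotDl.
rewrite sumrN big_split /= pdot_bAT.
have -> : \sum_j mdot (bL W lams j) (padd y (popp xs) j) = 0.
  apply: big1 => j _; apply: (lap_mdot (HWs j)) => i l k.
  have r1 := congr1 (fun M : 'rV[R]_(qd j) => M 0 k) (Hy.2.2 j i l).
  have r2 := congr1 (fun M : 'rV[R]_(qd j) => M 0 k) (HKs.2.2 j i l).
  rewrite /= !mxE in r1 r2; rewrite /padd /popp !mxE; lra.
rewrite bA_sub mdotBr.
have -> : bA A xs = bsum bj + vv by move: Hsumb; rewrite addrAC => /subr0_eq.
rewrite mdotDr (mdotC mu vv) Hcomp addr0.
have : 0 <= mdot mu (bsum bj - bA A y).
  rewrite /mdot; apply: sumr_ge0 => i _; apply: sumr_ge0 => k _; rewrite (ord1 i).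
  apply: mulr_ge0; first exact: NC.1.
  rewrite !mxE subr_ge0; exact: Hy.2.1 k.
rewrite mdotBr; lra.
Qed.
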